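(* If $A\in G$ fixes $Q$, then for any $a,b\in\mathrm{supp}\,Q$, $\langle Ab,a\rangle\ne0$ implies $a=b$ or $a$ $Q$-dominates $b$.
   Context: $\Gamma$ is a finite simplicial graph with vertex set $X$, $|X|=2g$, $A_\Gamma$ its right-angled Artin group, $H_\Gamma$ its abelianization, $\langle-,-\rangle$ the inner product on $H_\Gamma$ making the images of $X$ orthonormal; letters of $L=X\cup X^{-1}$ also denote their images in $H_\Gamma$; $\bar u\in X$ is the vertex of $u\in L$. $\mathrm{lk}(v)$ = neighbours, $\mathrm{st}(v)=\mathrm{lk}(v)\cup\{v\}$; $v\ge w$ iff $\mathrm{lk}(w)\subset\mathrm{st}(v)$, extended to letters via vertices. Fix a bijection $u\mapsto u^*$ of $L$ with $(u^* )^*=u^{-1}$ and letters $a_1,\dots,a_g$ whose vertices with those of $a_1^*,\dots,a_g^*$ are all of $X$; $Q=\sum\{[a_i]\wedge[a_i^*]:\bar a_i^*\text{ adjacent to }\bar a_i\}\in\Lambda^2H_\Gamma$, assumed nonzero, with diagonal action of $\mathrm{Aut}\,H_\Gamma$. $\mathrm{supp}\,Q$ = set of vertices appearing in $Q$. $G\le\mathrm{Aut}\,H_\Gamma$ is generated by the maps $E_{a,b}$ ($a\in X$, $b\in\mathrm{supp}\,Q$, $a\ge b$, $a\ne b$; $b\mapsto b+a$, other basis vectors fixed) and $N_b$ ($b\in\mathrm{supp}\,Q$; $b\mapsto -b$, others fixed). $Q$-domination on $\mathrm{supp}\,Q$: $a$ $Q$-dominates $b$ if either $a\ne\bar{b^*}$,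 $a\ge b$ and $b^*\ge a^*$; or $a=\bar{b^*}$ and $a\ge b$. *)

(* Defs.v *)
From mathcomp Require Import all_boot all_order all_algebra.
Set Implicit Arguments. Unset Strict Implicit. Unset Printing Implicit Defensive.
Import Order.TTheory GRing.Theory Num.Theory.
Local Open Scope ring_scope.

Section RAAG.
Variable V : finType.
Variable adj : rel V.

Definition lk (v : V) : {set V} := [set w | adj v w].
Definition st (v : V) : {set V} := v |: lk v.
Definition vge (v w : V) : bool := lk w \subset st v.

(* Letters: (x, true) is x, (x, false) is x^-1. *)
Definition letter := (V * bool)%type.
Definition bar (u : letter) : V := u.1.
Definition linv (u : letter) : letter := (u.1, ~~ u.2).
(* elements of H_Gamma = Z^X, as coordinate functions *)
Definition lvec (u : letter) : V -> int :=
  fun y => if y == u.1 then (if u.2 then 1 else -1) else 0.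

(* Lambda^2 H modelled as alternating coefficient functions c : V -> V -> int,
   with  omega = sum_{x<y} c x y  (x /\ y)  (c skew, zero diagonal). *)
Definition wedge (u v : V -> int) : V -> V -> int :=
  fun p q => u p * v q - u q * v p.

(* Endomorphisms of H: A x y = < A e_x , e_y > *)
Definition endo := V -> V -> int.
Definition idE : endo := fun x y => if x == y then 1 else 0.
Definition comp (B A : endo) : endo := fun x z => \sum_(y : V) A x y * B y z.
(* diagonal action on Lambda^2 H:  (A.omega) = sum c x y (A x /\ A y) *)
Definition actL2 (A : endo) (c : V -> V -> int) : V -> V -> int :=
  fun p q => \sum_(x : V) \sum_(y : V) c x y * A x p * A y q.

Definition Etr (a b : V) : endo := fun x y =>
  if x == b then (if y == b then 1 else 0) + (if y == a then 1 else 0)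
  else idE x y.
Definition Etr_inv (a b : V) : endo := fun x y =>
  if x == b then (if y == b then 1 else 0) - (if y == a then 1 else 0)
  else idE x y.
Definition Ninv (b : V) : endo := fun x y =>
  if x == y then (if x == b then -1 else 1) else 0.

Variable g : nat.
Variable star : letter -> letter.
Variable a : 'I_g -> letter.

Definition Qterm (i : 'I_g) : bool := adj (bar (star (a i))) (bar (a i)).
Definition Q : V -> V -> int :=
  fun p q => \sum_(i < g | Qterm i) wedge (lvec (a i)) (lvec (star (a i))) p q.
Definition suppQ : {set V} :=
  [set x | [exists i, Qterm i && ((x == bar (a i)) || (x == bar (star (a i))))]].

Inductive inG : endo -> Prop :=
| inG_id : inG idE
| inG_E : forall (x y : V) (A : endo), y \in suppQ -> vge x y -> x != y ->
    inG A -> inG (comp (Etr x y) A)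
| inG_Einv : forall (x y : V) (A : endo), y \in suppQ -> vge x y -> x != y ->
    inG A -> inG (comp (Etr_inv x y) A)
| inG_N : forall (y : V) (A : endo), y \in suppQ -> inG A -> inG (comp (Ninv y) A)
| inG_ext : forall A B : endo, inG A -> (forall x y, A x y = B x y) -> inG B.

Definition vstar (v : V) : V := bar (star (v, true)).
Definition Qdom (x y : V) : bool :=
  ((x != vstar y) && vge x y && vge (vstar y) (vstar x))
  || ((x == vstar y) && vge x y).
End RAAG.

(* Main.v *)
Require Import Defs.
From mathcomp Require Import ring.
From mathcomp Require Import all_boot all_order all_algebra.
Set Implicit Arguments. Unset Strict Implicit. Unset Printing Implicit Defensive.
Import Order.TTheory GRing.Theory Num.Theory.
Require Import Defs.
Local Open Scope ring_scope.

Section Gen.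
Variable V : finType.
Implicit Types A B C : endo V.

Lemma sum_ind (F : V -> int) (c : V) :
  \sum_(y : V) (if y == c then 1 else 0) * F y = F c.
Proof.
rewrite (bigD1 c) //= eqxx mul1r big1 ?addr0 // => y /negbTE ->; by rewrite mul0r.
Qed.

Lemma sum_ind' (F : V -> int) (c : V) :
  \sum_(y : V) (if c == y then 1 else 0) * F y = F c.
Proof.
rewrite -(sum_ind F c); apply eq_bigr => y _; by rewrite eq_sym.
Qed.

Lemma comp_ext B B' A A' : (forall x y : V, B x y = B' x y) ->
  (forall x y : V, A x y = A' x y) -> forall x y : V, comp B A x y = comp B' A' x y.
Proof. move=> HB HA x y; rewrite /comp; apply eq_bigr => w _; by rewrite HA HB. Qed.

Lemma compA C B A x w : comp C (comp B A) x w = comp (comp C B) A x w.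
Proof.
rewrite /comp.
under eq_bigr => z _ do rewrite big_distrl /=.
rewrite exchange_big; apply eq_bigr => y _; rewrite big_distrr.
apply eq_bigr => z _ /=; by rewrite mulrA.
Qed.

Lemma comp_idl A x z : comp (@idE V) A x z = A x z.
Proof.
rewrite /comp /idE (bigD1 z) //= eqxx mulr1 big1 ?addr0 // => y /negbTE ->.
by rewrite mulr0.
Qed.

Lemma comp_idr A x z : comp A (@idE V) x z = A x z.
Proof. by rewrite /comp /idE sum_ind'. Qed.

Lemma Etr_inv_Etr u v : u != v -> forall x z : V,
  comp (Etr_inv u v) (Etr u v) x z = idE x z.
Proof.
move=> huv x z; rewrite /comp {1}/Etr.
case: (eqVneq x v) => [->|hxv].
  under eq_bigr => y _ do rewrite mulrDl.
  rewrite big_split /= !sum_ind /Etr_inv eqxx (negbTE huv) /idE.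
  by rewrite [u == z]eq_sym [v == z]eq_sym subrK.
by rewrite /idE sum_ind' /Etr_inv (negbTE hxv).
Qed.

Lemma Etr_Etr_inv u v : u != v -> forall x z : V,
  comp (Etr u v) (Etr_inv u v) x z = idE x z.
Proof.
move=> huv x z; rewrite /comp {1}/Etr_inv.
case: (eqVneq x v) => [->|hxv].
  under eq_bigr => y _ do rewrite mulrBl.
  rewrite sumrB /= !sum_ind /Etr eqxx (negbTE huv) /idE.
  by rewrite [u == z]eq_sym [v == z]eq_sym addrK.
by rewrite /idE sum_ind' /Etr (negbTE hxv).
Qed.

Lemma Ninv_Ninv (b x z : V) : comp (Ninv b) (Ninv b) x z = idE x z.
Proof.
rewrite /comp (bigD1 x) //= big1 ?addr0; last first.
  by move=> y hy; rewrite /Ninv eq_sym (negbTE hy) mul0r.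
rewrite /Ninv /idE eqxx; case: (x == z); last by rewrite mulr0.
by case: (x == b); rewrite ?mulrNN mulr1.
Qed.

End Gen.

Section Dom.
Variable V : finType.
Variable adj : rel V.
Hypothesis adj_sym : symmetric adj.

Lemma vge_trans (x y z : V) : vge adj x y -> vge adj y z -> vge adj x z.
Proof.
rewrite /vge => /subsetP Hxy /subsetP Hyz; apply/subsetP => w Hw.
case/setU1P: (Hyz w Hw) => [Ewy|Hyw]; last exact: Hxy.
move: Hw; rewrite Ewy inE => Hzy.
have Hz : z \in lk adj y by rewrite inE adj_sym.
case/setU1P: (Hxy z Hz) => [Ezx|Hxz].
  by move: Hzy; rewrite Ezx; rewrite /st !inE => ->; rewrite orbT.
have Hx : x \in lk adj z by move: Hxz; rewrite !inE adj_sym.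
case/setU1P: (Hyz x Hx) => [->|Hyx].
  by rewrite /st !inE eqxx.
by move: Hyx; rewrite /st !inE adj_sym => ->; rewrite orbT.
Qed.

Definition Pdom (B : endo V) := forall x y : V, B y x != 0 -> x = y \/ vge adj x y.

Lemma Pdom_ext (A B : endo V) : (forall x y, A x y = B x y) -> Pdom A -> Pdom B.
Proof. by move=> H PA x y; rewrite -H; apply: PA. Qed.

Lemma Pdom_id : Pdom (@idE V).
Proof. by move=> x y; rewrite /idE; case: (eqVneq y x) => [->|_]; [by left|by rewrite eqxx]. Qed.

Lemma Pdom_Etr u v : vge adj u v -> Pdom (Etr u v).
Proof.
move=> H x y; rewrite /Etr; case: (eqVneq y v) => [->|hyv].
  case: (eqVneq x v) => [->|_]; first by left.
  by case: (eqVneq x u) => [->|_]; [right|rewrite addr0 eqxx].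
by rewrite /idE; case: (eqVneq y x) => [->|_]; [by left|by rewrite eqxx].
Qed.

Lemma Pdom_Etr_inv u v : vge adj u v -> Pdom (Etr_inv u v).
Proof.
move=> H x y; rewrite /Etr_inv; case: (eqVneq y v) => [->|hyv].
  case: (eqVneq x v) => [->|_]; first by left.
  by case: (eqVneq x u) => [->|_]; [right|rewrite subr0 eqxx].
by rewrite /idE; case: (eqVneq y x) => [->|_]; [by left|by rewrite eqxx].
Qed.

Lemma Pdom_N b : Pdom (Ninv b).
Proof. by move=> x y; rewrite /Ninv; case: (eqVneq y x) => [->|_]; [by left|by rewrite eqxx]. Qed.

Lemma sum_neq0 (F : V -> int) : \sum_w F w != 0 -> exists w, F w != 0.
Proof.
move=> H; case: (pickP (fun w => F w != 0)) => [w Hw|Hn]; first by exists w.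
move: H; rewrite big1 ?eqxx // => w _; apply/eqP; move: (Hn w) => /=.
by move/negbT; rewrite negbK.
Qed.

Lemma Pdom_comp B A : Pdom B -> Pdom A -> Pdom (comp B A).
Proof.
move=> PB PA x y; rewrite /comp => /sum_neq0 [w].
rewrite mulf_eq0 negb_or => /andP [Ha Hb].
case: (PA w y Ha) => [Ewy|Gwy]; case: (PB x w Hb) => [Exw|Gxw].
- by left; rewrite Exw.
- by right; rewrite -Ewy.
- by right; rewrite Exw.
- by right; apply: vge_trans Gxw Gwy.
Qed.

Variable g : nat.
Variable star : letter V -> letter V.
Variable a : 'I_g -> letter V.

Lemma Pdom_G A : inG adj star a A -> Pdom A.
Proof.
elim=> [|u v A' _ Hge _ _ IH|u v A' _ Hge _ _ IH|b A' _ _ IH|A' B' _ IH H].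
- exact: Pdom_id.
- by apply: Pdom_comp; [apply: Pdom_Etr|].
- by apply: Pdom_comp; [apply: Pdom_Etr_inv|].
- by apply: Pdom_comp; [apply: Pdom_N|].
- by apply: Pdom_ext H _.
Qed.

Lemma inv_ex A : inG adj star a A ->
  exists B, Pdom B /\ forall x z, comp B A x z = idE x z.
Proof.
elim=> [|u v A' _ Hge Hne _ [B [PB HB]]|u v A' _ Hge Hne _ [B [PB HB]]
        |b A' _ _ [B [PB HB]]|A' B' _ [B [PB HB]] H].
- by exists (@idE V); split; [exact: Pdom_id|move=> x z; rewrite comp_idl].
- exists (comp B (Etr_inv u v)); split; first by apply: Pdom_comp => //; apply: Pdom_Etr_inv.
  move=> x z; rewrite -compA -HB; apply: comp_ext => // p q.
  by rewrite compA (comp_ext (Etr_inv_Etr Hne) (fun _ _ => erefl)) comp_idl.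
- exists (comp B (Etr u v)); split; first by apply: Pdom_comp => //; apply: Pdom_Etr.
  move=> x z; rewrite -compA -HB; apply: comp_ext => // p q.
  by rewrite compA (comp_ext (Etr_Etr_inv Hne) (fun _ _ => erefl)) comp_idl.
- exists (comp B (Ninv b)); split; first by apply: Pdom_comp => //; apply: Pdom_N.
  move=> x z; rewrite -compA -HB; apply: comp_ext => // p q.
  by rewrite compA (comp_ext (@Ninv_Ninv V b) (fun _ _ => erefl)) comp_idl.
- exists B; split => // x z; rewrite -HB; exact: comp_ext.
Qed.

End Dom.

Section QS.
Variable V : finType.
Variable adj : rel V.
Hypothesis adj_irr : irreflexive adj.
Variable g : nat.
Hypothesis cardV : #|V| = (2 * g)%N.
Variable star : letter V -> letter V.
Hypothesis star_star : forall u, star (star u) = linv u.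
Variable a : 'I_g -> letter V.
Hypothesis a_cover : forall x : V, exists i : 'I_g,
      x = bar (a i) \/ x = bar (star (a i)).

Local Notation vs := (vstar star).
Local Notation QQ := (Q adj star a).
Local Notation S := (suppQ adj star a).

Lemma star_linv (u : letter V) : star (linv u) = linv (star u).
Proof. by rewrite -star_star star_star. Qed.

Lemma bar_star (u : letter V) : bar (star u) = vs (bar u).
Proof.
case: u => x [] //=; rewrite /vstar.
have -> : ((x, false) : letter V) = linv (x, true) by [].
by rewrite star_linv.
Qed.

Lemma vs_bar_star (u : letter V) : vs (bar (star u)) = bar u.
Proof. by rewrite -bar_star star_star. Qed.

Lemma vsK (v : V) : vs (vs v) = v.
Proof. by rewrite {2}/vstar vs_bar_star. Qed.

Lemma lvec_ne (u : letter V) (p : V) : p != bar u -> lvec u p = 0.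
Proof. by rewrite /lvec /bar => /negbTE ->. Qed.

Lemma lvec_bar (u : letter V) : lvec u (bar u) != 0.
Proof. by rewrite /lvec /bar eqxx; case: u.2. Qed.

Definition fpair (p : 'I_g * bool) : V :=
  if p.2 then bar (a p.1) else bar (star (a p.1)).

Lemma fpair_inj : injective fpair.
Proof.
suff /image_injP H : #|image fpair (@predT ('I_g * bool))| == #|@predT ('I_g * bool)|.
  by move=> x y; apply: H.
rewrite eqn_leq leq_image_card /=.
have -> : #|@predT ('I_g * bool)| = #|V|.
  by rewrite cardT -cardE card_prod card_ord card_bool cardV mulnC.
apply: subset_leq_card; apply/subsetP => x _.
have [i [->|->]] := a_cover x.
  by apply/imageP; exists (i, true).
by apply/imageP; exists (i, false).
Qed.

Lemma Q_skew (p q : V) : QQ p q = - QQ q p.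
Proof. by rewrite /Q -sumrN; apply eq_bigr => i _; rewrite /wedge opprB. Qed.

Lemma Q_zero (p q : V) : q != vs p -> QQ p q = 0.
Proof.
move=> hq; rewrite /Q big1 // => i _; rewrite /wedge.
have -> : lvec (a i) p * lvec (star (a i)) q = 0.
  case: (eqVneq p (bar (a i))) => [Ep|hp]; last by rewrite lvec_ne ?mul0r.
  rewrite (lvec_ne (u := star (a i)) (p := q)) ?mulr0 //.
  by rewrite bar_star -Ep.
have -> : lvec (a i) q * lvec (star (a i)) p = 0.
  case: (eqVneq p (bar (star (a i)))) => [Ep|hp]; last by rewrite (lvec_ne hp) mulr0.
  rewrite (lvec_ne (u := a i) (p := q)) ?mul0r //.
  by rewrite -(vs_bar_star (a i)) -Ep.
by rewrite subrr.
Qed.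

Lemma S_vs (p : V) : p \in S -> vs p \in S.
Proof.
rewrite !inE => /existsP [i /andP [Hq Hp]]; apply/existsP; exists i.
rewrite Hq /=; case/orP: Hp => /eqP ->.
  by rewrite -bar_star eqxx orbT.
by rewrite vs_bar_star eqxx.
Qed.

Lemma Q_vs (p : V) : p \in S -> QQ p (vs p) != 0.
Proof.
rewrite inE => /existsP [i /andP [Hq Hp]].
rewrite /Q (bigD1 i) //= big1 ?addr0; last first.
  move=> j /andP [_ hji]; rewrite /wedge.
  have hne : forall b, p != fpair (j, b).
    move=> b; apply/eqP => Ep; case/orP: Hp => /eqP Ep'.
      have : fpair (i, true) = fpair (j, b) by rewrite -Ep /fpair /= -Ep'.
      by move/fpair_inj => [Eij _]; rewrite Eij eqxx in hji.
    have : fpair (i, false) = fpair (j, b) by rewrite -Ep /fpair /= -Ep'.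
    by move/fpair_inj => [Eij _]; rewrite Eij eqxx in hji.
  rewrite (lvec_ne (hne true)) (lvec_ne (hne false)).
  by rewrite mul0r mulr0 subrr.
have Hadj : adj (bar (star (a i))) (bar (a i)) := Hq.
have Hd : bar (star (a i)) != bar (a i).
  by apply/eqP => E; move: Hadj; rewrite E adj_irr.
rewrite /wedge; case/orP: Hp => /eqP ->.
  rewrite -bar_star (lvec_ne (u := a i) (p := bar (star (a i)))) // mul0r subr0.
  by rewrite mulf_neq0 // lvec_bar.
rewrite vs_bar_star (lvec_ne (u := star (a i)) (p := bar (a i))); last by rewrite eq_sym.
rewrite mulr0 sub0r oppr_eq0.
by rewrite mulf_neq0 // lvec_bar.
Qed.

End QS.

Lemma rearr (b c ax ay : int) : b * (c * ax * ay) = ax * b * (c * ay).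
Proof. ring. Qed.

Lemma key_eq (V : finType) (A B : endo V) (c : V -> V -> int) :
  (forall p q, actL2 A c p q = c p q) ->
  (forall x z, comp B A x z = idE x z) ->
  forall p q, \sum_x c p x * A x q = \sum_x B x p * c x q.
Proof.
move=> HA HB p q.
under [RHS]eq_bigr => r _ do rewrite -HA /actL2 big_distrr.
rewrite exchange_big /=.
under [RHS]eq_bigr => x _ do under eq_bigr => r _ do rewrite big_distrr.
under [RHS]eq_bigr => x _ do rewrite exchange_big.
under [RHS]eq_bigr => x _ do under eq_bigr => y _ do under eq_bigr => r _ do rewrite /= rearr.
under [RHS]eq_bigr => x _ do under eq_bigr => y _ do rewrite -big_distrl /=.
under [RHS]eq_bigr => x _ do under eq_bigr => y _ do rewrite [X in X * _]HB.
under [RHS]eq_bigr => x _ do rewrite -big_distrr /=.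
by rewrite /idE sum_ind.
Qed.

Theorem lemma4p7 (V : finType) (adj : rel V)
  (adj_sym : symmetric adj) (adj_irr : irreflexive adj)
  (g : nat) (cardV : #|V| = (2 * g)%N)
  (star : letter V -> letter V) (star_bij : bijective star)
  (star_star : forall u, star (star u) = linv u)
  (a : 'I_g -> letter V)
  (a_cover : forall x : V, exists i : 'I_g,
      x = bar (a i) \/ x = bar (star (a i)))
  (Q_nonzero : exists p q : V, Q adj star a p q != 0)
  (A : endo V) (A_in_G : inG adj star a A)
  (A_fixes_Q : forall p q : V, actL2 A (Q adj star a) p q = Q adj star a p q) :
  forall x y : V, x \in suppQ adj star a -> y \in suppQ adj star a ->
    A y x != 0 -> x = y \/ Qdom adj star x y.
Proof.
move=> x y Sx Sy HAyx.
have PA := Pdom_G adj_sym A_in_G.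
have [B [PB HB]] := inv_ex adj_sym A_in_G.
case: (eqVneq x y) => [->|hxy]; first by left.
right.
have Hge : vge adj x y by case: (PA x y HAyx) => // Exy; rewrite Exy eqxx in hxy.
rewrite /Qdom; case: (eqVneq x (vstar star y)) => [Exs|hxs] /=.
  by rewrite ?Hge ?orbT ?andbT.
rewrite Hge /=.
have KE := key_eq A_fixes_Q HB (vstar star y) x.
rewrite (bigD1 y) //= big1 ?addr0 in KE; last first.
  by move=> w hw; rewrite (Q_zero adj star_star a) ?mul0r // (vsK star_star).
rewrite (bigD1 (vstar star x)) //= big1 ?addr0 in KE; last first.
  by move=> w hw; rewrite Q_skew (Q_zero adj star_star a) ?oppr0 ?mulr0.
have HBne : B (vstar star x) (vstar star y) != 0.
  apply/eqP => E0; move: KE; rewrite E0 mul0r => /eqP; rewrite mulf_eq0 (negbTE HAyx) orbF.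
  have := Q_vs adj_irr cardV star_star a_cover (S_vs star_star Sy).
  by rewrite (vsK star_star) => /negbTE ->.
case: (PB _ _ HBne) => [E|E]; last by rewrite E.
by have := congr1 (vstar star) E; rewrite !(vsK star_star) => Eyx; rewrite Eyx eqxx in hxy.
Qed.
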